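(* Let $n\ge 1$, let $k$ be an even positive divisor of $n$, and let $A$ be a subgroup of $(\mathbb{Z}/n\mathbb{Z})^\times$ such that $$A=\{jn/k+1 \bmod n : j\in J_+\}\cup\{jn/k-1 \bmod n: j\in J_-\}$$ for subsets $J_+,J_-\subseteq\{0,1,\dots,k-1\}$ with $J_-=\{k/2-j \bmod k : j\in J_+\}$. Let $r\in\mathbb{Z}/n\mathbb{Z}$ (represented by an integer) and $X=Ar$. (i) If $r$ is even, then $\sigma_X(y)\in\mathbb{R}$ for all $y\in\mathbb{Z}/n\mathbb{Z}$. (ii) If $r$ is odd, then $\sigma_X(y)$ is real whenever $y$ is even and purely imaginary whenever $y$ is odd (parity of $y$ being well defined since $n$ is even).
   Context: Write $e(\theta)=\exp(2\pi i\theta)$. For a subgroup $A$ of $(\mathbb{Z}/n\mathbb{Z})^\times$ and $r\in\mathbb{Z}/n\mathbb{Z}$, let $X=Ar=\{ar:a\in A\}$ and $\sigma_X(y)=\sum_{x\in X}e\left(\frac{xy}{n}\right)$ for $y\in\mathbb{Z}/n\mathbb{Z}$. *)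

(* Defs.v *)
(* Complex numbers are represented as pairs (real part, imaginary part). *)
From Stdlib Require Import Reals.
From mathcomp Require Import all_boot.

Set Implicit Arguments.
Unset Strict Implicit.
Unset Printing Implicit Defensive.

Definition cplx := (R * R)%type.
Definition cadd (z w : cplx) : cplx := (Rplus (fst z) (fst w), Rplus (snd z) (snd w)).
Definition czero : cplx := (R0, R0).

(* e(theta) = exp(2 pi i theta) = cos(2 pi theta) + i sin(2 pi theta). *)
Definition e (theta : R) : cplx :=
  (cos (Rmult (Rmult (IZR 2%Z) PI) theta), sin (Rmult (Rmult (IZR 2%Z) PI) theta)).

Definition is_real (z : cplx) : Prop := snd z = R0.
Definition is_purely_imaginary (z : cplx) : Prop := fst z = R0.

(* Z/nZ is modelled by 'I_n (residues 0..n-1); integers mod n by nat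
   representatives. *)

Definition unit_subgroup (n : nat) (A : {set 'I_n}) : Prop :=
  [/\ (forall a, a \in A -> coprime (val a) n),
      (exists2 u, u \in A & val u = 1 %% n),
      (forall a b, a \in A -> b \in A ->
          exists2 c, c \in A & val c = (val a * val b) %% n)
    & (forall a, a \in A -> exists2 b, b \in A & (val a * val b) %% n = 1 %% n)].

(* X = A r = { a r mod n : a in A }, r an integer representative (nat suffices
   to represent every residue). *)
Definition Aset_mul (n : nat) (A : {set 'I_n}) (r : nat) : {set 'I_n} :=
  [set x : 'I_n | [exists a in A, val x == (val a * r) %% n]].

Definition sigmaX (n : nat) (X : {set 'I_n}) (y : nat) : cplx :=
  foldr cadd czero
    [seq e (Rdiv (INR (val x * y)) (INR n)) | x <- enum X].

(* Main.v *)
From HB Require Import structures.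
Require Import Defs.
From Stdlib Require Import Reals Lra.
From mathcomp Require Import all_boot zify.

HB.instance Definition _ := Monoid.isComLaw.Build R R0 Rplus (fun a b c => esym (Rplus_assoc a b c)) Rplus_comm Rplus_0_l.


Open Scope R_scope.
Definition ang (n y v : nat) : R := Rmult (Rmult (IZR 2%Z) PI) (Rdiv (INR (v * y)) (INR n)).

Lemma ang_phi (n c x y : nat) : (0 < n)%N -> (x < n)%N ->
  exists t : nat, ang n y ((c + n - x) %% n)%N + 2 * INR t * PI =
     ang n y c - ang n y x + 2 * INR y * PI.
Proof.
move=> n0 xn.
set v := ((c + n - x) %% n)%N; set q := ((c + n - x) %/ n)%N.
have E : (v + x + q * n = c + n)%N.
  rewrite /v /q addnAC [(_ %% _ + _)%N]addnC -divn_eq subnK //.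
  by apply: leq_trans (ltnW xn) (leq_addl _ _).
exists (q * y)%N.
have ER := f_equal INR E.
rewrite -!plusE -!multE !plus_INR !mult_INR in ER.
have nz : INR n <> 0 by apply: not_0_INR; move=> h; rewrite h in n0.
rewrite /ang -!multE !mult_INR.
have -> : INR v = INR c + INR n - INR x - INR q * INR n by lra.
idtac.
field; exact: nz.
Qed.

Lemma trig_phi (n c x y : nat) : (0 < n)%N -> (x < n)%N ->
  cos (ang n y ((c + n - x) %% n)%N) = cos (ang n y c - ang n y x) /\
  sin (ang n y ((c + n - x) %% n)%N) = sin (ang n y c - ang n y x).
Proof.
move=> n0 xn; have [t Ht] := @ang_phi n c x y n0 xn.
by rewrite -(cos_period _ t) -(sin_period _ t) Ht cos_period sin_period.
Qed.

Lemma fst_fold (s : seq cplx) : fst (foldr cadd czero s) = \big[Rplus/R0]_(z <- s) fst z.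
Proof. by elim: s => [|z s IH]; rewrite ?big_nil ?big_cons //= IH. Qed.
Lemma snd_fold (s : seq cplx) : snd (foldr cadd czero s) = \big[Rplus/R0]_(z <- s) snd z.
Proof. by elim: s => [|z s IH]; rewrite ?big_nil ?big_cons //= IH. Qed.

Lemma fst_sigma n (X : {set 'I_n}) y :
  fst (sigmaX X y) = \big[Rplus/R0]_(x in X) cos (ang n y x).
Proof. by rewrite /sigmaX fst_fold big_map big_enum. Qed.
Lemma snd_sigma n (X : {set 'I_n}) y :
  snd (sigmaX X y) = \big[Rplus/R0]_(x in X) sin (ang n y x).
Proof. by rewrite /sigmaX snd_fold big_map big_enum. Qed.

Lemma sum_sym n (X : {set 'I_n}) (phi : 'I_n -> 'I_n) (F : 'I_n -> R) :
  involutive phi -> (forall x, x \in X -> phi x \in X) ->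
  \big[Rplus/R0]_(x in X) F x = \big[Rplus/R0]_(x in X) F (phi x).
Proof.
move=> inv HX; rewrite (reindex_inj (inv_inj inv)); apply: eq_bigl => x.
apply/idP/idP; first by move/HX; rewrite inv.
exact: HX.
Qed.

Lemma sum_opp I (r : seq I) (P : pred I) (F : I -> R) :
  \big[Rplus/R0]_(i <- r | P i) (- F i) = - \big[Rplus/R0]_(i <- r | P i) F i.
Proof.
symmetry; apply: (big_morph Ropp); last by rewrite Ropp_0.
by move=> a b; rewrite Ropp_plus_distr.
Qed.

Lemma sum_anti n (X : {set 'I_n}) (phi : 'I_n -> 'I_n) (F : 'I_n -> R) :
  involutive phi -> (forall x, x \in X -> phi x \in X) ->
  (forall x, F (phi x) = - F x) -> \big[Rplus/R0]_(x in X) F x = 0.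
Proof.
move=> inv HX HF; have := @sum_sym _ X phi F inv HX.
have -> : \big[Rplus/R0]_(x in X) F (phi x) = \big[Rplus/R0]_(x in X) (- F x).
  by apply: eq_bigr => x _.
rewrite sum_opp; lra.
Qed.
Close Scope R_scope.

Lemma mod_mul_lift (k m j j' h : nat) : 0 < m ->
  (j + j') %% k = h %% k -> (j * m + j' * m) %% (k * m) = (h * m) %% (k * m).
Proof.
move=> m0 E; by rewrite -mulnDl -!muln_modl E.
Qed.

Lemma partner (n k : nat) (A : {set 'I_n}) (Jp Jm : {set 'I_k}) :
  (1 <= n)%N ->
  (0 < k)%N -> (k %| n)%N ->
  (forall x : 'I_n, x \in A <->
      (exists2 j : 'I_k, j \in Jp & val x = (val j * (n %/ k) + 1) %% n) \/
      (exists2 j : 'I_k, j \in Jm & val x = (val j * (n %/ k) + n - 1) %% n)) ->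
  (forall j : 'I_k, j \in Jm <->
      exists2 j' : 'I_k, j' \in Jp & val j = (k %/ 2 + k - val j') %% k) ->
  forall a, a \in A -> exists2 b, b \in A & (val b + val a) %% n = (k %/ 2 * (n %/ k)) %% n.
Proof.
move=> n1 k0 kn HA HJ a aA.
set m := n %/ k; set h := k %/ 2.
have nE : n = k * m by rewrite mulnC /m divnK.
have m0 : 0 < m by rewrite lt0n; apply/eqP => m0; move: n1; rewrite nE m0 muln0.
have L : forall j j', (j + j') %% k = h %% k -> (j * m + j' * m) %% n = (h * m) %% n.
  by move=> j j' E; rewrite nE; apply: mod_mul_lift.
case/HA: aA => [[j jP ->] | [j jM ->]].
- pose j2 : 'I_k := Ordinal (ltn_pmod (h + k - j) k0).
  have j2M : j2 \in Jm by apply/HJ; exists j.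
  pose b : 'I_n := Ordinal (ltn_pmod (j2 * m + n - 1) n1).
  exists b; first by apply/HA; right; exists j2.
  rewrite /= modnDml modnDmr.
  have -> : j2 * m + n - 1 + (j * m + 1) = j2 * m + j * m + n.
    by lia.
  rewrite modnDr; apply: L.
  rewrite /= modnDml subnK ?modnDr //.
  by rewrite (leq_trans (ltnW (ltn_ord j))) // leq_addl.
- have [j' j'P jE] := (HJ j).1 jM.
  pose b : 'I_n := Ordinal (ltn_pmod (j' * m + 1) n1).
  exists b; first by apply/HA; left; exists j'.
  rewrite /= modnDml modnDmr.
  have -> : j' * m + 1 + (j * m + n - 1) = j' * m + j * m + n.
    by lia.
  rewrite modnDr; apply: L.
  rewrite jE modnDmr addnC subnK ?modnDr //.
  by rewrite (leq_trans (ltnW (ltn_ord j'))) // leq_addl.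
Qed.

Lemma phi_inv n c (n0 : 0 < n) :
  involutive (fun x : 'I_n => Ordinal (ltn_pmod (c + n - x) n0)).
Proof.
move=> x; apply: val_inj => /=.
set v := (c + n - x) %% n.
have xcn : x <= c + n by rewrite (leq_trans (ltnW (ltn_ord x))) // leq_addl.
rewrite -[RHS](modn_small (ltn_ord x)); apply/eqP; rewrite -(eqn_modDr v) subnK; last first.
  by rewrite (leq_trans (ltnW (ltn_pmod _ n0))) // leq_addl.
by rewrite /v modnDmr subnKC.
Qed.

Lemma phi_X n (A : {set 'I_n}) r H (n0 : 0 < n) :
  (forall a, a \in A -> exists2 b, b \in A & (val b + val a) %% n = H %% n) ->
  forall x, x \in Aset_mul A r ->
    Ordinal (ltn_pmod ((H * r) %% n + n - x) n0) \in Aset_mul A r.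
Proof.
move=> P x; rewrite !inE => /existsP [a /andP [aA /eqP xE]].
have [b bA Hb0] := P a aA.
have Hb : (b + a) %% n = H %% n := Hb0.
apply/existsP; exists b; rewrite bA /=; apply/eqP/eqP.
have E1 : (b * r + a * r) %% n = (H * r) %% n by rewrite -mulnDl -modnMml Hb modnMml.
rewrite -(eqn_modDr (val a * r)) E1.
rewrite -modnDmr -xE subnK; last by rewrite (leq_trans (ltnW (ltn_ord x))) // leq_addl.
by rewrite modnDr modn_mod.
Qed.

Open Scope R_scope.
Lemma sum_zero n (X : {set 'I_n}) (c y : nat) (n0 : (0 < n)%N) (F : R -> R) :
 (forall x, x \in X -> Ordinal (ltn_pmod (c + n - x)%N n0) \in X) ->
 (forall x : 'I_n, F (ang n y ((c + n - x) %% n)%N) = - F (ang n y x)) ->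
 \big[Rplus/R0]_(x in X) F (ang n y x) = 0.
Proof.
move=> HX HF.
apply: (@sum_anti n X (fun x => Ordinal (ltn_pmod (c+n-x)%N n0)) (fun x => F (ang n y x)) (@phi_inv n c n0) HX) => x; exact: HF.
Qed.
Close Scope R_scope.

Theorem proposition4p1
  (n k : nat) (A : {set 'I_n}) (Jp Jm : {set 'I_k}) (r : nat) :
  (1 <= n)%N ->
  (0 < k)%N -> ~~ odd k -> (k %| n)%N ->
  unit_subgroup A ->
  (forall x : 'I_n, x \in A <->
      (exists2 j : 'I_k, j \in Jp & val x = (val j * (n %/ k) + 1) %% n) \/
      (exists2 j : 'I_k, j \in Jm & val x = (val j * (n %/ k) + n - 1) %% n)) ->
  (forall j : 'I_k, j \in Jm <->
      exists2 j' : 'I_k, j' \in Jp & val j = (k %/ 2 + k - val j') %% k) ->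
  (~~ odd r -> forall y : nat, is_real (sigmaX (Aset_mul A r) y)) /\
  (odd r -> forall y : nat,
      (~~ odd y -> is_real (sigmaX (Aset_mul A r) y)) /\
      (odd y -> is_purely_imaginary (sigmaX (Aset_mul A r) y))).
Proof.
move=> n1 k0 kev kn _ HA HJ.
have P := @partner n k A Jp Jm n1 k0 kn HA HJ.
set m := n %/ k in P; set h := k %/ 2 in P.
have nE : n = k * m by rewrite mulnC /m divnK.
have kE : k = h * 2.
  by rewrite muln2 /h divn2 -{1}(odd_double_half k) (negbTE kev) add0n.
have m0 : 0 < m by rewrite lt0n; apply/eqP => m0; move: n1; rewrite nE m0 muln0.
have PX := @phi_X n A r (h * m) n1 P.
set c := (h * m * r) %% n in PX.
have nz : INR n <> R0 by apply: not_0_INR; move=> e0; move: (n1); rewrite e0.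
split.
- move=> re y; rewrite /is_real snd_sigma.
  have c0 : c = 0.
    rewrite /c -[r](odd_double_half r) (negbTE re) add0n -muln2.
    have -> : h * m * (r./2 * 2) = r./2 * n by rewrite nE kE; lia.
    by rewrite modnMl.
  apply: (@sum_zero n _ c y n1 sin PX) => x.
  have [_ ->] := @trig_phi n c x y n1 (ltn_ord x).
  have A0 : ang n y c = R0 by rewrite c0 /ang mul0n /=; unfold Rdiv; ring.
  by rewrite A0 Rminus_0_l sin_neg.
- move=> ro y.
  have cE : c = h * m.
    rewrite /c -[r](odd_double_half r) ro -muln2.
    have -> : h * m * (true + r./2 * 2) = r./2 * n + h * m by rewrite nE kE; lia.
    have h0 : 0 < h by move: k0; rewrite kE muln_gt0 andbT.
    rewrite modnMDl modn_small // nE kE; nia.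
  have Hang : ang n y c = Rmult PI (INR y).
    have nE' : INR n = Rmult 2 (INR (h * m)).
      by rewrite nE kE -multE !mult_INR /=; ring.
    have hz : INR (h * m) <> R0.
      by move=> e0; apply: nz; rewrite nE' e0; ring.
    rewrite /ang cE nE' -multE mult_INR /=; field; exact: hz.
  split.
  + move=> ye; rewrite /is_real snd_sigma.
    apply: (@sum_zero n _ c y n1 sin PX) => x.
    have [_ ->] := @trig_phi n c x y n1 (ltn_ord x).
    rewrite Hang -[in INR y](odd_double_half y) (negbTE ye) add0n -muln2 -multE mult_INR.
    have -> : Rminus (Rmult PI (Rmult (INR y./2) (INR 2))) (ang n y x)
       = Rplus (Ropp (ang n y x)) (Rmult (Rmult 2 (INR y./2)) PI) by simpl; ring.
    by rewrite sin_period sin_neg.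
  + move=> yo; rewrite /is_purely_imaginary fst_sigma.
    apply: (@sum_zero n _ c y n1 cos PX) => x.
    have [-> _] := @trig_phi n c x y n1 (ltn_ord x).
    rewrite Hang -[in INR y](odd_double_half y) yo -muln2 -plusE -multE plus_INR mult_INR.
    have -> : Rminus (Rmult PI (Rplus (INR true) (Rmult (INR y./2) (INR 2)))) (ang n y x)
       = Rplus (Rplus (Ropp (ang n y x)) PI) (Rmult (Rmult 2 (INR y./2)) PI) by simpl; ring.
    by rewrite cos_period neg_cos cos_neg.
Qed.
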